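(* Let $X_1,\dots,X_t$ be independent symmetric real random variables, and suppose that for some $x>0$ and $p>0$ we have $\Pr[|X_i|<x]>p$ for all $i\in[t]$. Then \[ \Pr\left[\left|\operatorname{median}_{i\in[t]} X_i\right|\ge x\right] < 2e^{-tp^2/2}. \]
   Context: A real random variable $Y$ is symmetric if $Y$ and $-Y$ have the same distribution. For even $t$ the median is the average of the two middle values. *)

(* Defs.v *)
From HB Require Import structures.
From mathcomp Require Import all_boot all_order all_algebra.
From mathcomp Require Import all_classical all_reals all_analysis.
Set Implicit Arguments. Unset Strict Implicit. Unset Printing Implicit Defensive.
Import Order.TTheory GRing.Theory Num.Theory.
Local Open Scope classical_set_scope.
Local Open Scope ring_scope.

(* Mutual independence of a finite family of real random variables:
   product rule for preimages of any family of Borel sets (taking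
   B i = setT recovers every subfamily). *)
Definition mutually_independent d (T : measurableType d) (R : realType)
  (P : probability T R) (t : nat) (X : 'I_t -> T -> R) : Prop :=
  forall B : 'I_t -> set R, (forall i, measurable (B i)) ->
    P (\bigcap_(i in [set: 'I_t]) (X i @^-1` B i)) =
    (\prod_(i < t) P (X i @^-1` B i))%E.

Definition symmetric_rv d (T : measurableType d) (R : realType)
  (P : probability T R) (Y : T -> R) : Prop :=
  forall B : set R, measurable B ->
    P (Y @^-1` B) = P ((fun w => - Y w) @^-1` B).

(* Median of a finite list of reals: the middle value of the sorted list
   if its length is odd, the average of the two middle values if even
   (convention: 0 for the empty list). *)
Definition median (R : realType) (s : seq R) : R :=
  let u := sort <=%R s in
  let n := size s in
  if odd n then nth 0 u n./2
  else (nth 0 u n./2.-1 + nth 0 u n./2) / 2.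

(* Main.v *)
Require Import Defs.
From HB Require Import structures.
From mathcomp Require Import all_boot all_order all_algebra.
From mathcomp Require Import all_classical all_reals all_analysis.
From mathcomp Require Import zify ring lra.
Import Order.TTheory GRing.Theory Num.Theory.
Local Open Scope classical_set_scope.
Local Open Scope ring_scope.
Section Sorted.
Variable R : realType.
Implicit Types (s : seq R) (y z : R).

Lemma sortedR s : sorted <=%R (sort <=%R s).
Proof. exact: sort_le_sorted. Qed.

Lemma nth_sort_mono s i j : (i <= j)%N -> (j < size s)%N ->
  nth 0 (sort <=%R s) i <= nth 0 (sort <=%R s) j.
Proof.
move=> ij js.
apply: (sorted_leq_nth le_trans lexx 0 (sortedR s)) => //;
  rewrite inE size_sort //; exact: leq_ltn_trans ij js.
Qed.

Lemma count_ge_nth s k y : (k < size s)%N ->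
  (y <= nth 0 (sort <=%R s) k) = (size s - k <= count (fun z => (y <= z)%R) s)%N.
Proof.
move=> ks; set u := sort <=%R s.
have su : size u = size s by rewrite size_sort.
rewrite -(count_sort <=%R) -/u -[in X in (_ <= X)%N](cat_take_drop k u) count_cat.
apply/idP/idP => [yk|].
  have : all (fun z => y <= z) (drop k u).
    apply/(all_nthP 0) => j; rewrite size_drop => jl.
    rewrite nth_drop; apply: (le_trans yk). apply: nth_sort_mono; first exact: leq_addr.
    rewrite su in jl; lia.
  rewrite all_count => /eqP ->; rewrite size_drop su; exact: leq_addl.
apply: contraTT; rewrite -ltNge => yk; rewrite -ltnNge.
have h1 : count (fun z => y <= z) (take k u) = 0%N.
  apply/eqP; rewrite -leqn0 leqNgt -has_count; apply/(has_nthP 0) => -[j].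
  rewrite size_take su ks => jk; rewrite nth_take // leNgt; apply/negP/negbT.
  rewrite (le_lt_trans _ yk) //; apply: nth_sort_mono => //; exact: ltnW.
rewrite h1 add0n.
rewrite (drop_nth 0) ?su // /=.
have -> : (y <= u`_k) = false by rewrite leNgt yk.
rewrite add0n; apply: leq_ltn_trans (count_size _ _) _.
rewrite size_drop su; lia.
Qed.


Lemma count_le_nth s k z : (k < size s)%N -> nth 0 (sort <=%R s) k <= z ->
  (k.+1 <= count (fun w => (w <= z)%R) s)%N.
Proof.
move=> ks kz; set u := sort <=%R s.
have su : size u = size s by rewrite size_sort.
rewrite -(count_sort <=%R) -/u -[in X in (_ <= X)%N](cat_take_drop k.+1 u) count_cat.
have : all (fun w => (w <= z)%R) (take k.+1 u).
  apply/(all_nthP 0) => j; rewrite size_takel ?su // => jl.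
  rewrite nth_take //; apply: le_trans kz; apply: nth_sort_mono => //.
rewrite all_count => /eqP ->; rewrite size_takel ?su //; exact: leq_addr.
Qed.

Lemma median_ge s x : x <= median s -> (size s <= 2 * count (fun w => (x <= w)%R) s)%N.
Proof.
rewrite /median; set n := size s; set u := sort <=%R s.
have hn := odd_double_half n; rewrite -mul2n in hn.
case: (posnP n) => [-> //|n0].
case: ifP => on xm.
- have kn : (n./2 < n)%N by lia.
  move: xm; rewrite /u count_ge_nth // -/n; rewrite on /= in hn. clearbody u n; move: (count _ s) (n./2) hn => c h hn; lia.
- have kn : (n./2 < n)%N by lia.
  have k1 : (n./2.-1 <= n./2)%N by lia.
  have ab := @nth_sort_mono s _ _ k1 kn.
  have : x <= nth 0 u n./2.
    move: xm ab; rewrite -/u => xm ab.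
    have h2 : (0:R) < 2 by [].
    rewrite ler_pdivlMr // in xm; lra.
  rewrite /u count_ge_nth // -/n; rewrite on /= in hn; clearbody u n; move: (count _ s) (n./2) hn => c h hn; lia.
Qed.

Lemma median_le s z : median s <= z -> (size s <= 2 * count (fun w => (w <= z)%R) s)%N.
Proof.
rewrite /median; set n := size s; set u := sort <=%R s.
have hn := odd_double_half n; rewrite -mul2n in hn.
case: (posnP n) => [-> //|n0].
case: ifP => on xm.
- have kn : (n./2 < n)%N by lia.
  have := @count_le_nth s _ _ kn xm; rewrite -/n; rewrite on /= in hn; clearbody u n; move: (count _ s) (n./2) hn => c h hn; lia.
- have kn : (n./2 < n)%N by lia.
  have k1 : (n./2.-1 <= n./2)%N by lia.
  have k1n : (n./2.-1 < n)%N by lia.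
  have ab := @nth_sort_mono s _ _ k1 kn.
  have : nth 0 u n./2.-1 <= z.
    move: xm ab; rewrite -/u => xm ab.
    have h2 : (0:R) < 2 by [].
    rewrite ler_pdivrMr // in xm; lra.
  move/(@count_le_nth s _ _ k1n); rewrite -/n; rewrite on /= in hn; clearbody u n; move: (count _ s) (n./2) hn => c h hn; lia.
Qed.
End Sorted.

Lemma cnt_enum (T : finType) (P : pred T) : count P (enum T) = #|P|.
Proof. by rewrite cardE -size_filter /enum_mem filter_predT. Qed.

Section Chernoff.
Variable R : realType.

Lemma W_ge1 (t : nat) (a : R) (f : {ffun 'I_t -> bool}) : 0 < a -> 1 <= a ->
  (t <= 2 * count (fun i => f i) (enum 'I_t))%N ->
  1 <= \prod_(i < t) (if f i then a else a^-1).
Proof.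
move=> a0 a1; rewrite cnt_enum => ht.
rewrite (bigID (fun i => f i)) /=.
rewrite (eq_bigr (fun _ => a)); last by move=> i ->.
rewrite [X in _ * X](eq_bigr (fun _ => a^-1)); last by move=> i /negbTE ->.
rewrite !prodr_const.
have hc := cardC (fun i : 'I_t => f i); rewrite card_ord in hc.
set m := #|_| in hc ht *; set n := #|_| in hc.
have [d ->] : exists d, m = (n + d)%N by exists (m - n)%N; lia.
rewrite exprD mulrAC -exprMn mulfV ?gt_eqF // expr1n mul1r.
exact: exprn_ege1.
Qed.

Lemma factor_le (p q s : R) : 0 < p -> p < 1 -> 0 <= q -> q <= (1-p)/2 ->
  0 < s -> s ^+ 2 = 1 - p ^+ 2 ->
  q * ((1+p)/s) + (1-q) * ((1+p)/s)^-1 <= s.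
Proof.
move=> p0 p1 q0 qp s0 ss.
have p1' : 1 + p != 0 by rewrite gt_eqF // ltr_wpDr // ltW.
have sn : s != 0 by rewrite gt_eqF.
have e : q * ((1+p)/s) + (1-q) * ((1+p)/s)^-1 =
   (q*(1+p)^+2 + (1-q)*s^+2)/(s*(1+p)) by field; apply/andP.
rewrite e ss ler_pdivrMr; last by apply: mulr_gt0 => //; lra.
rewrite [s * (s * _)]mulrA -expr2 ss.
have h : 0 <= p * (1+p) * (1 - p - 2 * q).
  apply: mulr_ge0; first by apply: mulr_ge0; lra.
  have h2 : 2 * q <= 1 - p by rewrite -ler_pdivlMl //; lra.
  lra.
nra.
Qed.

Lemma chernoff_real t (q : 'I_t -> R) (p : R) : 0 < p -> p < 1 ->
  (forall i, 0 <= q i) -> (forall i, q i <= (1-p)/2) ->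
  \sum_(f : {ffun 'I_t -> bool} | (t <= 2 * count (fun i => f i) (enum 'I_t))%N)
     \prod_(i < t) (if f i then q i else 1 - q i) <= Num.sqrt (1 - p ^+ 2) ^+ t.
Proof.
move=> p0 p1 q0 qp.
set s := Num.sqrt (1 - p ^+ 2).
have s0 : 0 < s by rewrite sqrtr_gt0; nra.
have ss : s ^+ 2 = 1 - p ^+ 2 by rewrite sqr_sqrtr //; nra.
set a := (1 + p) / s.
have a0 : 0 < a by apply: divr_gt0 => //; lra.
have a1 : 1 <= a.
  rewrite ler_pdivlMr // mul1r.
  have : s <= 1 + p by nra.
  done.
have c0 f i : 0 <= (if f i then q i else 1 - q i).
  case: (f i) => //; have := qp i; lra.
pose F (i : 'I_t) (b : bool) := (if b then q i else 1 - q i) * (if b then a else a^-1).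
apply: (@le_trans _ _ (\sum_(f : {ffun 'I_t -> bool} | (t <= 2 * count (fun i => f i) (enum 'I_t))%N)
     \prod_(i < t) F i (f i))).
  apply: ler_sum => f gf; rewrite /F big_split /=.
  rewrite -[X in X <= _]mulr1; apply: ler_wpM2l; first exact: prodr_ge0.
  exact: W_ge1.
apply: (@le_trans _ _ (\sum_(f : {ffun 'I_t -> bool}) \prod_(i < t) F i (f i))).
  rewrite [X in _ <= X](bigID (fun f : {ffun 'I_t -> bool} => (t <= 2 * count (fun i => f i) (enum 'I_t))%N)) /=.
  rewrite lerDl; apply: sumr_ge0 => f _; apply: prodr_ge0 => i _.
  by rewrite /F; apply: mulr_ge0 => //; case: (f i) => //; rewrite ?invr_ge0 ltW.
rewrite -(bigA_distr_bigA F).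
have -> : s ^+ t = \prod_(i < t) s by rewrite prodr_const card_ord.
apply: ler_prod => i _; rewrite big_bool /F /=; apply/andP; split.
  apply: addr_ge0; apply: mulr_ge0 => //; rewrite ?invr_ge0 ?ltW //; have := qp i; lra.
exact: factor_le.
Qed.
End Chernoff.

Section Prob.
Variables (d : measure_display) (T : measurableType d) (R : realType).
Variable (P : probability T R).
Local Open Scope ereal_scope.

Lemma union_bound (I : Type) (r : seq I) (Pr : pred I) (F : I -> set T) :
  (forall i, measurable (F i)) ->
  P (\big[setU/set0]_(i <- r | Pr i) F i) <= \sum_(i <- r | Pr i) P (F i).
Proof.
move=> mF; elim: r => [|i r IH]; first by rewrite !big_nil measure0.
rewrite !big_cons; case: ifP => // _.
apply: le_trans (measureU2 _ _ _) _ => //; first exact: bigsetU_measurable.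
exact: leeD.
Qed.

Lemma Pfin (A : set T) : measurable A -> P A \is a fin_num.
Proof. by move=> mA; apply: fin_num_measure. Qed.

Variables (t : nat) (X : 'I_t -> {RV P >-> R}).

Definition Ef (b : R -> bool) (f : {ffun 'I_t -> bool}) : set T :=
  \bigcap_(i in [set: 'I_t]) (X i @^-1` [set y | b y = f i]).

Lemma prob_bound (b : R -> bool) (p : R) (A : set T) :
  mutually_independent P (fun i => (X i : T -> R)) ->
  measurable [set y | b y] ->
  (0 < p)%R -> (p < 1)%R ->
  (forall i, P (X i @^-1` [set y | b y]) <= ((1 - p) / 2)%:E) ->
  measurable A ->
  (forall w, A w -> (t <= 2 * count (fun i => b (X i w)) (enum 'I_t))%N) ->
  P A <= (Num.sqrt (1 - p ^+ 2) ^+ t)%:E.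
Proof.
move=> ind mb p0 p1 hq mA hA.
set good := fun f : {ffun 'I_t -> bool} => (t <= 2 * count (fun i => f i) (enum 'I_t))%N.
have mB f i : measurable [set y | b y = f i].
  case: (f i).
    by rewrite (_ : [set y | b y = true] = [set y | b y]).
  rewrite (_ : [set y | b y = false] = ~` [set y | b y]); first exact: measurableC.
  by apply/seteqP; split => y /=; case: (b y).
have mE f : measurable (Ef b f).
  apply: fin_bigcap_measurable; first exact: finite_finset.
  move=> i _; exact: measurable_funPTI.
pose q i := fine (P (X i @^-1` [set y | b y])).
have mq i : measurable (X i @^-1` [set y | b y]) by exact: measurable_funPTI.
have qE i : P (X i @^-1` [set y | b y]) = (q i)%:E by rewrite fineK // Pfin.
have PE f : P (Ef b f) = (\prod_(i < t) (if f i then q i else 1 - q i)%R)%:E.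
  rewrite /Ef ind //; rewrite -prodEFin; apply: eq_bigr => i _.
  case: (f i).
    by rewrite (_ : [set y | b y = true] = [set y | b y]).
  rewrite (_ : [set y | b y = false] = ~` [set y | b y]); last first.
    by apply/seteqP; split => y /=; case: (b y).
  by rewrite -preimage_setC probability_setC // qE EFinB.
apply: (@le_trans _ _ (P (\big[setU/set0]_(f | good f) Ef b f))).
  apply: le_measure; rewrite ?inE //; first exact: bigsetU_measurable.
  move=> w Aw; rewrite -bigcup_seq_cond.
  exists [ffun i => b (X i w)].
    rewrite /= mem_index_enum /=.
    by rewrite /good (eq_count (a2 := fun i => b (X i w))) ?hA // => i; rewrite ffunE.
  by move=> i _; rewrite /= ffunE.
apply: le_trans (@union_bound _ _ _ _ mE) _.
rewrite (eq_bigr _ (fun f _ => PE f)) sumEFin lee_fin.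
apply: chernoff_real => // i.
- by apply: fine_ge0; exact: measure_ge0.
- by rewrite -lee_fin -qE.
Qed.

Lemma mB_lem (b : R -> bool) (B : bool) : measurable [set y | b y] -> measurable [set y | b y = B].
Proof.
move=> mb; case: B.
  by rewrite (_ : [set y | b y = true] = [set y | b y]).
rewrite (_ : [set y | b y = false] = ~` [set y | b y]); first exact: measurableC.
by apply/seteqP; split => y /=; case: (b y).
Qed.

Lemma meas_pred (b : R -> bool) (G : pred {ffun 'I_t -> bool}) :
  measurable [set y | b y] -> measurable [set w | G [ffun i => b (X i w)]].
Proof.
move=> mb.
rewrite (_ : [set w | G [ffun i => b (X i w)]] = \big[setU/set0]_(f | G f) Ef b f).
  apply: bigsetU_measurable => f _.
  apply: fin_bigcap_measurable; first exact: finite_finset.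
  move=> i _; apply: measurable_funPTI; exact: mB_lem.
apply/seteqP; split => w /=.
  move=> Gw; rewrite -bigcup_seq_cond.
  exists [ffun i => b (X i w)]; first by rewrite /= mem_index_enum /=.
  by move=> i _; rewrite /= ffunE.
rewrite -bigcup_seq_cond => -[f /= /andP[_ Gf] Efw].
suff -> : [ffun i => b (X i w)] = f by [].
by apply/ffunP => i; rewrite ffunE; apply: Efw.
Qed.

Definition vw (w : T) := [seq (X i w : R) | i <- enum 'I_t].

Lemma size_vw w : size (vw w) = t.
Proof. by rewrite size_map size_enum_ord. Qed.

Lemma os_meas k : (k < t)%N -> measurable_fun setT (fun w => nth 0%R (sort <=%R (vw w)) k).
Proof.
move=> kt.
apply: (measurability (@measurable_realfun.RGenCInfty.G R)) => [|/= _ [_] [r] -> <-].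
  exact: measurable_realfun.RGenCInfty.measurableE.
rewrite setTI.
pose G := fun f : {ffun 'I_t -> bool} => (t - k <= count (fun i => f i) (enum 'I_t))%N.
rewrite (_ : _ @^-1` _ = [set w | G [ffun i => (r <= X i w)%R]]).
  apply: (@meas_pred (fun y => (r <= y)%R) G).
  by rewrite -set_itvcy; exact: measurable_itv.
apply/seteqP; split => w /=; rewrite in_itv /= andbT count_ge_nth size_vw // count_map;
  by rewrite (eq_count (a2 := fun i => [ffun i => (r <= X i w)%R] i)) // => i; rewrite ffunE.
Qed.

Lemma med_meas : measurable_fun setT (fun w => median (vw w)).
Proof.
have tE w : median (vw w) = if odd t then nth 0%R (sort <=%R (vw w)) t./2
   else ((nth 0%R (sort <=%R (vw w)) t./2.-1 + nth 0%R (sort <=%R (vw w)) t./2) / 2)%R.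
  by rewrite /median size_vw.
rewrite (funext tE).
have [t0|tpos] := posnP t.
  rewrite [X in measurable_fun _ X](_ : _ = cst 0%R); first exact: measurable_cst.
  apply: funext => w; have -> : vw w = [::] by apply/nilP; rewrite /nilp size_vw t0.
  by rewrite t0 /= addr0 mul0r.
have k1 : (t./2 < t)%N by rewrite ltn_half_double; lia.
have k2 : (t./2.-1 < t)%N by lia.
case: (odd t); first exact: os_meas.
apply: measurable_realfun.measurable_funM; last exact: measurable_cst.
apply: measurable_realfun.measurable_funD; exact: os_meas.
Qed.
End Prob.

Theorem lemma3p3 (d : measure_display) (T : measurableType d) (R : realType)
  (P : probability T R) (t : nat) (X : 'I_t -> {RV P >-> R}) (x p : R) :
  mutually_independent P (fun i => (X i : T -> R)) ->
  (forall i, symmetric_rv P (X i)) ->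
  0 < x -> 0 < p ->
  (forall i, (p%:E < P [set w | (`|X i w| < x)%R])%E) ->
  (P [set w | (x <= `|median [seq X i w | i <- enum 'I_t]|)%R] <
     (2 * expR (- (t%:R * p ^+ 2) / 2))%:E)%E.
Proof.
move=> ind sym x0 p0 hp.
have [t0|tpos] := posnP t.
  rewrite (_ : [set w | _] = set0); last first.
    apply/seteqP; split => w //=.
    have -> : [seq X i w | i <- enum 'I_t] = [::].
      by apply/nilP; rewrite /nilp size_map size_enum_ord t0.
    by rewrite /median /= addr0 mul0r normr0 leNgt x0.
  by rewrite measure0 lte_fin; apply: mulr_gt0 => //; exact: expR_gt0.
have mge : measurable [set y : R | x <= y] by rewrite -set_itvcy; exact: measurable_itv.
have mle : measurable [set y : R | y <= - x] by rewrite -set_itvNyc; exact: measurable_itv.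
have key i : (P (X i @^-1` [set y | (x <= y)%R]) <= ((1 - p) / 2)%:E)%E /\
             (P (X i @^-1` [set y | (y <= - x)%R]) <= ((1 - p) / 2)%:E)%E /\ p < 1.
  set Ai := X i @^-1` _; set Bi := X i @^-1` _.
  have mA : measurable Ai by exact: measurable_funPTI.
  have mB : measurable Bi by exact: measurable_funPTI.
  have Ce : [set w | `|X i w| < x] = ~` (Ai `|` Bi).
    apply/seteqP; split => w /=.
    - rewrite ltNge ler_normr lerNr => /negP h [h1|h2]; apply: h; by rewrite ?h1 ?h2 ?orbT.
    - move=> h; rewrite ltNge ler_normr lerNr; apply/negP => /orP[h1|h2]; apply: h; by [left|right].
  have dis : Ai `&` Bi = set0.
    apply/seteqP; split => w //= [h1 h2]; have := le_trans h1 h2; lra.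
  have BA : P Bi = P Ai.
    rewrite /Bi sym //; congr (P _); apply/seteqP; split => w /=; by rewrite lerN2.
  have e1 : P (~` (Ai `|` Bi)) = (1 - (P Ai + P Bi))%E.
    rewrite probability_setC; last exact: measurableU.
    by rewrite measureU.
  have := hp i; rewrite Ce e1 BA.
  have fA : P Ai \is a fin_num := @Pfin _ _ _ P _ mA.
  have gA : (0 <= P Ai)%E := measure_ge0 P Ai.
  move: fA gA; case: (P Ai) => // a _; rewrite lee_fin => a0.
  move=> h0; have h : p < 1 - (a + a) by rewrite -lte_fin EFinB EFinD.
  clear h0 e1 BA.
  split; first by rewrite lee_fin; lra.
  split; first by rewrite lee_fin; lra.
  lra.
have p1 : p < 1 by case: (key (Ordinal tpos)) => _ [].
set med := fun w => median [seq X i w | i <- enum 'I_t].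
have mmed := @med_meas _ _ _ P t X.
have mpre B : measurable B -> measurable (med @^-1` B).
  by move=> mB; rewrite -[_ @^-1` _]setTI; exact: mmed.
set E1 := med @^-1` [set y | x <= y].
set E2 := med @^-1` [set y | y <= - x].
rewrite (_ : [set w | _] = E1 `|` E2); last first.
  apply/seteqP; split => w /=; rewrite ler_normr lerNr.
    by move=> /orP[h|h]; [left|right].
  by move=> [h|h]; rewrite h ?orbT.
set s := Num.sqrt (1 - p ^+ 2).
have b1 : (P E1 <= (s ^+ t)%:E)%E.
  apply: (@prob_bound _ _ _ P t X (fun y => x <= y) p E1 ind mge p0 p1).
  - by move=> i; case: (key i).
  - exact: mpre.
  - move=> w E1w; have := @median_ge R _ _ E1w; rewrite size_map size_enum_ord count_map.
    by [].
have b2 : (P E2 <= (s ^+ t)%:E)%E.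
  apply: (@prob_bound _ _ _ P t X (fun y => y <= - x) p E2 ind mle p0 p1).
  - by move=> i; case: (key i) => _ [].
  - exact: mpre.
  - move=> w E2w; have := @median_le R _ _ E2w; rewrite size_map size_enum_ord count_map.
    by [].
apply: le_lt_trans (measureU2 _ _ _) _; [exact: mpre|exact: mpre|].
apply: le_lt_trans (leeD b1 b2) _.
rewrite -EFinD lte_fin.
suff h : s ^+ t < expR (- (t%:R * p ^+ 2) / 2) by lra.
set e := expR (- (p ^+ 2) / 2).
have -> : - (t%:R * p ^+ 2) / 2 = t%:R * (- (p ^+ 2) / 2) by field.
rewrite expRM_natl -/e ltrXn2r ?gt_eqF ?sqrtr_ge0 //.
have e0 : 0 < e by exact: expR_gt0.
have s0 : 0 <= s by exact: sqrtr_ge0.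
have ss : s ^+ 2 = 1 - p ^+ 2 by rewrite sqr_sqrtr //; nra.
have ee : e ^+ 2 = expR (- (p ^+ 2)).
  by rewrite /e -expRM_natl; congr expR; field.
have : 1 + - (p ^+ 2) < expR (- (p ^+ 2)) by apply: expR_gt1Dx; rewrite oppr_eq0 gt_eqF //; nra.
rewrite -ee -ss; nra.
Qed.
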